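(* Let $N\ge2$. The period $T^{G_3,M}_N$ of the M-type 3-state Grover walk on $C_N$ equals $6$ if $N=3$ and $\infty$ otherwise. The period $T^{G_3,F}_N$ of the F-type 3-state Grover walk on $C_N$ equals $4$ if $N=3$ and $\infty$ otherwise.
   Context: For $N\ge2$, vertices of the cycle $C_N$ are $\mathbb{Z}/N\mathbb{Z}$. The state space of a 3-state walk is $\mathbb{C}^N\otimes\mathbb{C}^3$ with orthonormal basis $|x\rangle\otimes|\leftarrow\rangle,\ |x\rangle\otimes|\cdot\rangle,\ |x\rangle\otimes|\rightarrow\rangle$ ($x\in\mathbb{Z}/N\mathbb{Z}$). The shift $S$ acts by $S(|x\rangle\otimes|\leftarrow\rangle)=|x-1\rangle\otimes|\leftarrow\rangle$, $S(|x\rangle\otimes|\rightarrow\rangle)=|x+1\rangle\otimes|\rightarrow\rangle$, $S(|x\rangle\otimes|\cdot\rangle)=|x\rangle\otimes|\cdot\rangle$ (mod $N$). For a unitary $3\times3$ local coin $A$ (in the ordered basis $(|\leftarrow\rangle,|\cdot\rangle,|\rightarrow\rangle)$) the time-evolution operator is $U=S(I_N\otimes A)$. The M-type Grover walk uses $A^{G_3,M}=\frac13\begin{bmatrix}-1&2&2\\2&-1&2\\2&2&-1\end{bmatrix}$ and the F-type Grover walk uses $A^{G_3,F}=\frac13\begin{bmatrix}2&2&-1\\2&-1&2\\-1&2&2\end{bmatrix}$; the resulting operators are $U^{G_3,M}_N$ and $U^{G_3,F}_N$. The period of a walk with time-evolution operator $U$ is $\inf\{n\ge1:U^n=I\}$,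 or $\infty$ if no such $n$ exists. *)

(* Defs.v *)
From HB Require Import structures.
From mathcomp Require Import all_boot all_order all_algebra all_field.
Set Implicit Arguments. Unset Strict Implicit. Unset Printing Implicit Defensive.
Import Order.TTheory GRing.Theory Num.Theory.
Local Open Scope ring_scope.

(* State space C^N (x) C^3 is represented as N x 3 matrices psi, with
   psi x c the coefficient of |x> (x) |c>, where the coin basis is ordered
   0 = |<-| , 1 = |.| , 2 = |->| ; vertices 'I_N = Z/NZ (ordS = +1, ord_pred = -1). *)
Definition state (N : nat) := 'M[algC]_(N, 3).

(* The local coin (I_N (x) A): psi'(x,c) = sum_d A c d psi(x,d). *)
Definition coin_op (N : nat) (A : 'M[algC]_3) (psi : state N) : state N :=
  psi *m A^T.

(* The shift S: |x>|<-> |-> |x-1>|<->, |x>|.> |-> |x>|.>, |x>|-> |-> |x+1>|->. *)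
Definition shift_op (N : nat) (psi : state N) : state N :=
  \matrix_(x < N, c < 3)
    if (val c == 0)%N then psi (ordS x) c
    else if (val c == 2)%N then psi (ord_pred x) c
    else psi x c.

Definition walk_op (N : nat) (A : 'M[algC]_3) (psi : state N) : state N :=
  shift_op (coin_op A psi).

Definition coinGM : 'M[algC]_3 :=
  3%:R^-1 *: \matrix_(i < 3, j < 3) (if i == j then -1 else 2%:R).

Definition coinGF : 'M[algC]_3 :=
  3%:R^-1 *: \matrix_(i < 3, j < 3) (if (val i + val j == 2)%N then -1 else 2%:R).

Definition UGM (N : nat) := @walk_op N coinGM.
Definition UGF (N : nat) := @walk_op N coinGF.

Definition is_identity_power (N : nat) (U : state N -> state N) (n : nat) : Prop :=
  forall psi : state N, iter n U psi = psi.

(* period U = p, where p = Some n means the finite value n and None means infinity: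
   period = inf {n >= 1 : U^n = I} (inf of the empty set = infinity). *)
Definition period_is (N : nat) (U : state N -> state N) (p : option nat) : Prop :=
  match p with
  | Some n => (0 < n)%N /\ is_identity_power U n /\
              (forall m, (0 < m < n)%N -> ~ is_identity_power U m)
  | None => forall m, (0 < m)%N -> ~ is_identity_power U m
  end.

Arguments UGM N : clear implicits.
Arguments UGF N : clear implicits.

(* Main.v *)
Require Import Defs.
From mathcomp Require Import all_boot all_order all_algebra all_field.
From mathcomp Require Import ring.
Set Implicit Arguments. Unset Strict Implicit. Unset Printing Implicit Defensive.
Import Order.TTheory GRing.Theory Num.Theory.
Local Open Scope ring_scope.
From mathcomp Require Import zify.
Lemma tr_Aint n (M : 'M[algC]_n.+1) m : (0 < m)%N -> M ^+ m = 1 -> \tr M \in Aint.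
Proof.
move=> m0 Mm.
have [r Hr] := closed_field_poly_normal (char_poly M).
rewrite (monicP (char_poly_monic M)) scale1r in Hr.
have sz : size r = n.+1.
  by have := size_char_poly M; rewrite Hr size_prod_XsubC => -[].
have -> : \tr M = \sum_(z <- r) z.
  apply: oppr_inj; rewrite -char_poly_trace // Hr -coefPn_prod_XsubC ?sz //.
rewrite big_seq; apply: rpred_sum => z zr.
have : eigenvalue M z.
  by rewrite eigenvalue_root_char Hr root_prod_XsubC.
case/eigenvalueP => v vM vnz.
apply: (@Aint_unity_root m) => //; rewrite unity_rootE.
have : v *m M ^+ m = z ^+ m *: v.
  elim: (m) => [|k IH]; first by rewrite expr0 mulmx1 scale1r.
  by rewrite exprSr -mulmxE mulmxA IH -scalemxAl vM scalerA -exprSr.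
rewrite Mm mulmx1 => /eqP; rewrite -subr_eq0 -{1}(scale1r v) -scalerBl scaler_eq0 (negbTE vnz) orbF subr_eq0 eq_sym //.
Qed.
Definition mode N (w : algC) (v : 'rV[algC]_3) : state N :=
  \matrix_(x < N, c < 3) (w ^+ x * v 0 c).

Definition dg N (w : algC) : 'rV[algC]_3 :=
  \row_(c < 3) (if val c == 0%N then w else if val c == 2%N then w ^+ N.-1 else 1).

Definition Mat N (w : algC) (A : 'M[algC]_3) := A^T *m diag_mx (dg N w).

Lemma walk_mode N w A v : (0 < N)%N -> w ^+ N = 1 ->
  walk_op A (mode N w v) = mode N w (v *m Mat N w A).
Proof.
move=> N0 wN.
have cm : forall (y : 'I_N) (c : 'I_3), \sum_(j < 3) mode N w v y j * A^T j c = w ^+ y * \sum_(j < 3) v 0 j * A^T j c.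
  move=> y c; rewrite mulr_sumr; apply: eq_bigr => d _; rewrite !mxE; ring.
apply/matrixP => x c; rewrite /Mat mulmxA mul_mx_diag !mxE /=.
case: c => [[|[|[|c]]] hc] //=; rewrite cm.
- rewrite /= expr_mod // exprS; ring.
- ring.
- rewrite /= expr_mod //.
  have -> : ((x + N).-1 = x + N.-1)%N by rewrite -!subn1 addnBA.

  rewrite exprD; ring.
Qed.

Lemma iter_mode N w A v m : (0 < N)%N -> w ^+ N = 1 ->
  iter m (walk_op A) (mode N w v) = mode N w (v *m Mat N w A ^+ m).
Proof.
move=> N0 wN; elim: m => [|m IH]; first by rewrite expr0 mulmx1.
by rewrite iterS IH walk_mode // exprSr -mulmxE mulmxA.
Qed.

Lemma ident_Mat N w A m : (0 < N)%N -> w ^+ N = 1 ->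
  is_identity_power (@walk_op N A) m -> Mat N w A ^+ m = 1.
Proof.
move=> N0 wN H.
have Hv : forall v : 'rV[algC]_3, v *m Mat N w A ^+ m = v.
  move=> v; have := H (mode N w v); rewrite iter_mode // => /matrixP E.
  apply/matrixP => i c; have := E (Ordinal N0) c; rewrite !mxE /= expr0 !mul1r.
  by rewrite (ord1 i).
apply/row_matrixP => i; by rewrite rowE Hv rowE mulmx1.
Qed.

Lemma n3 : (3%:R : algC) != 0. Proof. by rewrite pnatr_eq0. Qed.

Lemma trM N w : \tr (Mat N w coinGM) = - (w + 1 + w ^+ N.-1) / 3%:R.
Proof.
rewrite /Mat mul_mx_diag /mxtrace !big_ord_recr big_ord0 /= !mxE /=.
by field.
Qed.

Lemma trF N w : \tr (Mat N w coinGF) = (2%:R * w - 1 + 2%:R * w ^+ N.-1) / 3%:R.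
Proof.
rewrite /Mat mul_mx_diag /mxtrace !big_ord_recr big_ord0 /= !mxE /=.
by field.
Qed.
Lemma not_Aint_inv (k : nat) : (1 < k)%N -> ((k%:R : algC)^-1) \notin Aint.
Proof.
move=> k1; apply/negP => H.
have k0 : (k%:R : algC) != 0 by rewrite pnatr_eq0 -lt0n ltnW.
have : (k%:R : algC)^-1 \in Num.int.
  by apply: Cint_rat_Aint => //; rewrite rpredV rpred_nat.
rewrite intrEge0 ?invr_ge0 ?ler0n //; case/natrP => n hn.
have : (k * n)%:R = (1 : algC) by rewrite natrM -hn mulfV.
move/eqP; rewrite -[1 : algC]/(1%:R) eqr_nat.
by rewrite muln_eq1 => /andP[/eqP kk _]; rewrite kk in k1.
Qed.


Lemma w_ne1 d (w : algC) : (1 < d)%N -> d.-primitive_root w -> w - 1 != 0.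
Proof.
move=> d1 pw; rewrite subr_eq0; apply/negP => /eqP w1.
have := prim_order_dvd pw 1; rewrite w1 expr1 eqxx dvdn1 => /eqP d1'.
by rewrite d1' in d1.
Qed.

Lemma nt_coprime d (w : algC) : (1 < d)%N -> ~~ (3 %| d)%N -> d.-primitive_root w ->
  (1 + w + w ^+ 2) / 3%:R \notin Aint.
Proof.
move=> d1 d3 pw.
have [k [j hk]] : exists k j, (3 * k = j * d + 1)%N.
  have := divn_eq d 3; have := ltn_pmod d (isT : (0 < 3)%N).
  move: d3; rewrite /dvdn; case: (d %% 3)%N => [|[|[|r]]] //= _ _ hd.
  - by exists (2 * (d %/ 3) + 1)%N, 2%N; lia.
  - by exists (d %/ 3 + 1)%N, 1%N; lia.
have w3k : w ^+ (3 * k) = w.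
  by rewrite hk exprD (mulnC j) exprM (prim_expr_order pw) expr1n mul1r expr1.
set S := \sum_(i < k) (w ^+ 3) ^+ i.
have SA : S \in Aint by apply: rpred_sum => i _; apply/rpredX/rpredX/(Aint_prim_root pw).
have key : (1 + w + w ^+ 2) * S = 1.
  apply: (mulfI (w_ne1 d1 pw)).
  have : (w ^+ 3) ^+ k - 1 = (w ^+ 3 - 1) * S by rewrite subrX1.
  rewrite -exprM w3k => E.
  rewrite mulr1 [RHS]E; ring.
apply/negP => zA.
have : (1 + w + w ^+ 2) / 3%:R * S \in Aint by apply: rpredM.
rewrite mulrAC key mul1r; apply/negP; exact: not_Aint_inv.
Qed.

Lemma nt_nine (w : algC) : 9.-primitive_root w -> (1 + w + w ^+ 2) / 3%:R \notin Aint.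
Proof.
move=> pw.
have w9 : w ^+ 9 = 1 := prim_expr_order pw.
have w3 : w ^+ 3 - 1 != 0.
  by rewrite subr_eq0 -(prim_order_dvd pw).
have h6 : w ^+ 6 + w ^+ 3 + 1 = 0.
  apply: (mulfI w3); rewrite mulr0.
  have -> : (w ^+ 3 - 1) * (w ^+ 6 + w ^+ 3 + 1) = w ^+ 9 - 1 by ring.
  by rewrite w9 subrr.
set v := 10%:R + 11%:R * w + 7%:R * w ^+ 2 + 10%:R * w ^+ 3 + 4%:R * w ^+ 4 - 4%:R * w ^+ 5.
have vA : v \in Aint.
  have wA := Aint_prim_root pw.
  by rewrite /v ?(rpredB, rpredD, rpredM, rpredX, rpred_nat, wA).
have hv : (w - 1) ^+ 6 * v = 3%:R.
  apply/eqP; rewrite -subr_eq0; apply/eqP.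
  have -> : (w - 1) ^+ 6 * v - 3%:R = (w ^+ 6 + w ^+ 3 + 1) *
     (7%:R - 49%:R * w + 91%:R * w ^+ 2 - 74%:R * w ^+ 3 + 28%:R * w ^+ 4 - 4%:R * w ^+ 5) by rewrite /v; ring.
  by rewrite h6 mul0r.
apply/negP => zA.
have qA : (w - 1) ^+ 2 / 3%:R \in Aint.
  have -> : (w - 1) ^+ 2 / 3%:R = (1 + w + w ^+ 2) / 3%:R - w.
    by field.
  by apply: rpredB => //; apply: Aint_prim_root pw.
have : ((w - 1) ^+ 2 / 3%:R) ^+ 3 * v \in Aint by apply: rpredM => //; apply: rpredX.
have -> : ((w - 1) ^+ 2 / 3%:R) ^+ 3 * v = (w - 1) ^+ 6 * v / 27%:R.
  by field.
rewrite hv.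
have -> : (3%:R / 27%:R : algC) = (9%:R)^-1 by field.
by apply/negP; apply: not_Aint_inv.
Qed.

Lemma exists_bad N : (2 <= N)%N -> N != 3%N ->
  exists w : algC, w ^+ N = 1 /\ (1 + w + w ^+ 2) / 3%:R \notin Aint.
Proof.
move=> N2 N3.
have gen : forall d, (1 < d)%N -> ~~ (3 %| d)%N -> (d %| N)%N ->
    exists w : algC, w ^+ N = 1 /\ (1 + w + w ^+ 2) / 3%:R \notin Aint.
  move=> d d1 d3 dN; have [w pw] := C_prim_root_exists (ltnW d1).
  exists w; split; last exact: nt_coprime pw.
  by apply/eqP; rewrite -(prim_order_dvd pw).
case: (boolP (9 %| N)%N) => [h9|n9].
  have [w pw] := C_prim_root_exists (isT : (0 < 9)%N).
  exists w; split; last exact: nt_nine pw.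
  by apply/eqP; rewrite -(prim_order_dvd pw).
case: (boolP (3 %| N)%N) => [h3|n3]; last exact: (gen N).
apply: (gen (N %/ 3)%N).
- move: h3 N3 N2; rewrite /dvdn => /eqP h3 N3 N2.
  have := divn_eq N 3; rewrite h3 addn0 => E.
  apply/negPn/negP; rewrite -leqNgt => H. lia.
- apply/negP => H; move: n9; rewrite -(divnK h3).
  by rewrite mulnC -[9%N]/(3 * 3)%N dvdn_pmul2l // H.
- by apply: dvdn_div.
Qed.
Definition nxt (x : nat) : nat := match x with 0 => 1 | 1 => 2 | _ => 0 end%N.
Definition prv (x : nat) : nat := match x with 0 => 2 | 1 => 0 | _ => 1 end%N.

Definition step (a : nat -> nat -> algC) (g : nat -> nat -> algC) : nat -> nat -> algC :=
  fun x c => let y := (match c with 0 => nxt x | 2 => prv x | _ => x end)%N in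
    a c 0%N * g y 0%N + a c 1%N * g y 1%N + a c 2%N * g y 2%N.

Definition am (c d : nat) : algC := 3%:R^-1 * (if c == d then -1 else 2%:R).
Definition af (c d : nat) : algC := 3%:R^-1 * (if (c + d == 2)%N then -1 else 2%:R).

Definition gof (psi : state 3) : nat -> nat -> algC := fun i j => psi (inord i) (inord j).

Lemma walk3 (A : 'M[algC]_3) (a : nat -> nat -> algC) (psi : state 3) : (forall c d : 'I_3, A c d = a c d) ->
  forall x c : 'I_3, walk_op A psi x c = step a (gof psi) x c.
Proof.
move=> hA x c.
have E : forall i j : 'I_3, psi i j = gof psi i j by move=> i j; rewrite /gof !inord_val.
rewrite /walk_op /shift_op /coin_op !mxE.
case: x => [[|[|[|x]]] hx] //; case: c => [[|[|[|c]]] hc] //;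
  rewrite /= ?mxE ?big_ord_recr ?big_ord0 /= ?mxE ?hA !E /step /=; ring.
Qed.

Lemma M6 (g : nat -> nat -> algC) x c : (x < 3)%N -> (c < 3)%N -> iter 6 (step am) g x c = g x c.
Proof.
case: x => [|[|[|x]]] // _; case: c => [|[|[|c]]] // _; cbv beta iota zeta delta [iter step nxt prv am]; rewrite /=; by field.
Qed.

Lemma F4 (g : nat -> nat -> algC) x c : (x < 3)%N -> (c < 3)%N -> iter 4 (step af) g x c = g x c.
Proof.
case: x => [|[|[|x]]] // _; case: c => [|[|[|c]]] // _;
cbv beta iota zeta delta [iter step nxt prv af]; rewrite /=; by field.
Qed.

Lemma step_ext a (g h : nat -> nat -> algC) :
  (forall i j, (i < 3)%N -> (j < 3)%N -> g i j = h i j) ->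
  forall x c, (x < 3)%N -> step a g x c = step a h x c.
Proof.
move=> H x c hx; rewrite /step.
have hy : ((match c with 0 => nxt x | 2 => prv x | _ => x end) < 3)%N.
  by case: c => [|[|[|c]]] //; case: x hx => [|[|[|x]]].
by rewrite !H.
Qed.

Lemma iter_walk3 (A : 'M[algC]_3) (a : nat -> nat -> algC) (psi : state 3) : (forall c d : 'I_3, A c d = a c d) ->
  forall n (x c : 'I_3), iter n (walk_op A) psi x c = iter n (step a) (gof psi) x c.
Proof.
move=> hA; elim=> [|n IH] x c; first by rewrite /= /gof !inord_val.
rewrite iterS (walk3 _ hA) iterS; apply: step_ext => //.
move=> i j hi hj; rewrite /gof IH /= !inordK //.
Qed.

Lemma amE (c d : 'I_3) : coinGM c d = am c d.
Proof. by rewrite /coinGM !mxE. Qed.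
Lemma afE (c d : 'I_3) : coinGF c d = af c d.
Proof. by rewrite /coinGF !mxE. Qed.

Lemma ipM6 : is_identity_power (UGM 3) 6.
Proof.
move=> psi; apply/matrixP => x c; rewrite (iter_walk3 _ amE) M6 //= /gof !inord_val //.
Qed.

Lemma ipF4 : is_identity_power (UGF 3) 4.
Proof.
move=> psi; apply/matrixP => x c; rewrite (iter_walk3 _ afE) F4 //= /gof !inord_val //.
Qed.

Definition h0 : nat -> nat -> algC := fun i j => if (i == 0%N) && (j == 0%N) then 1 else 0.
Definition psi0 : state 3 := \matrix_(x < 3, c < 3) h0 x c.

Lemma iter_step_ext a n (g h : nat -> nat -> algC) :
  (forall i j, (i < 3)%N -> (j < 3)%N -> g i j = h i j) ->
  forall x c, (x < 3)%N -> (c < 3)%N -> iter n (step a) g x c = iter n (step a) h x c.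
Proof.
move=> H; elim: n => [|n IH] x c hx hc /=; first exact: H.
by apply: step_ext => // i j hi hj; apply: IH.
Qed.

Lemma not_ip (A : 'M[algC]_3) (a : nat -> nat -> algC) n k :
  (forall c d : 'I_3, A c d = a c d) -> k != 9%N ->
  iter n (step a) h0 0%N 0%N = k%:R / 9%:R -> ~ is_identity_power (@walk_op 3 A) n.
Proof.
move=> hA k9 E H.
have := H psi0; move/matrixP => /(_ ord0 ord0).
rewrite (iter_walk3 _ hA) (@iter_step_ext _ _ _ h0) //; last first.
  by move=> i j hi hj; rewrite /gof mxE !inordK.
rewrite E mxE /h0 /= => E2.
have n9 : (9%:R : algC) != 0 by rewrite pnatr_eq0.
have : (k%:R : algC) = 9%:R by rewrite -[k%:R](divfK n9) E2 mul1r.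
by move/eqP; rewrite eqr_nat (negbTE k9).
Qed.

Lemma nM2 : ~ is_identity_power (UGM 3) 2.
Proof.
apply: (@not_ip _ am _ 4%N amE) => //.
cbv beta iota zeta delta [iter step nxt prv am h0]; rewrite /=; by field.
Qed.
Lemma nM3 : ~ is_identity_power (UGM 3) 3.
Proof.
apply: (@not_ip _ am _ 5%N amE) => //.
cbv beta iota zeta delta [iter step nxt prv am h0]; rewrite /=; by field.
Qed.
Lemma nF2 : ~ is_identity_power (UGF 3) 2.
Proof.
apply: (@not_ip _ af _ 1%N afE) => //.
cbv beta iota zeta delta [iter step nxt prv af h0]; rewrite /=; by field.
Qed.

Lemma ip_add N (U : state N -> state N) a b :
  is_identity_power U a -> is_identity_power U b -> is_identity_power U (a + b).
Proof. by move=> Ha Hb psi; rewrite iterD Hb Ha. Qed.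

Lemma ip_sub N (U : state N -> state N) a b :
  is_identity_power U a -> is_identity_power U (b + a) -> is_identity_power U b.
Proof. by move=> Ha Hb psi; rewrite -{1}(Ha psi) -iterD Hb. Qed.

Lemma no_period N (A : 'M[algC]_3) : A = coinGM \/ A = coinGF ->
  (2 <= N)%N -> N != 3%N -> forall m, (0 < m)%N -> ~ is_identity_power (@walk_op N A) m.
Proof.
move=> hA N2 N3 m m0 H.
have N0 : (0 < N)%N by apply: leq_trans N2.
have [w [wN wA]] := exists_bad N2 N3.
have Mm := ident_Mat N0 wN H.
have trA : \tr (Mat N w A) \in Aint := tr_Aint m0 Mm.
have wAint : w \in Aint by apply: (@Aint_unity_root N) => //; rewrite unity_rootE wN.
have zA : (1 + w + w ^+ N.-1) / 3%:R \in Aint.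
  case: hA => hA'; subst A.
  - have -> : (1 + w + w ^+ N.-1) / 3%:R = - \tr (Mat N w coinGM) by rewrite trM; field.
    by rewrite rpredN.
  - have -> : (1 + w + w ^+ N.-1) / 3%:R = 2%:R * (\tr (Mat N w coinGF) + 1) - (1 + w + w ^+ N.-1).
      by rewrite trF; field.
    by rewrite rpredB ?rpredM ?rpredD ?rpredX ?rpred_nat ?rpred1.
move/negP: wA; apply.
have -> : (1 + w + w ^+ 2) / 3%:R = w * ((1 + w + w ^+ N.-1) / 3%:R).
  have e : w * w ^+ N.-1 = 1 by rewrite -exprS prednK.
  by rewrite mulrA mulrDr mulrDr e; field.
by apply: rpredM.
Qed.

Local Close Scope ring_scope.

Theorem theorem6p2 (N : nat) (hN : (2 <= N)%N) :
  period_is (UGM N) (if N == 3 then Some 6 else None) /\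
  period_is (UGF N) (if N == 3 then Some 4 else None).
Proof.
case: (eqVneq N 3%N) => [->|N3] /=.
  split.
  - split=> //; split; first exact: ipM6.
    move=> m /andP[m0 m6] H.
    case: m m0 m6 H => [|[|[|[|[|[|m]]]]]] // _ _ H.
    + by apply: nM2; apply: (ip_add H H).
    + exact: nM2 H.
    + exact: nM3 H.
    + by apply: nM2; apply: (@ip_sub _ _ 4 2 H ipM6).
    + by apply: nM2; have H1 := @ip_sub _ _ 5 1 H ipM6; apply: (ip_add H1 H1).
  - split=> //; split; first exact: ipF4.
    move=> m /andP[m0 m4] H.
    case: m m0 m4 H => [|[|[|[|m]]]] // _ _ H.
    + by apply: nF2; apply: (ip_add H H).
    + exact: nF2 H.
    + by apply: nF2; have H1 := @ip_sub _ _ 3 1 H ipF4; apply: (ip_add H1 H1).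
split=> m m0.
- exact: (@no_period N coinGM (or_introl erefl) hN N3).
- exact: (@no_period N coinGF (or_intror erefl) hN N3).
Qed.
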